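(* Let $\mathbf A\in\mathbb C^{m\times n}$ with $m\ge n$, and let $\mathbf A=\mathbf Q\mathbf R$ be its (thin) QR decomposition, partitioned as $[\mathbf A_1\ \mathbf A_2]=[\mathbf Q_1\ \mathbf Q_2]\begin{bmatrix}\mathbf R_{11}&\mathbf R_{12}\\ \mathbf 0&\mathbf R_{22}\end{bmatrix}$ with $\mathbf A_1\in\mathbb C^{m\times(n-k)}$ and $\mathbf R_{22}\in\mathbb C^{k\times k}$. If $\sigma_i(\mathbf A)<\sigma_1(\mathbf A_1)$ for $i=1,\dots,k$, then for $i=1,\dots,k$, $$\sigma_i(\mathbf R_{22})\le\Big[\frac{\sigma_n(\mathbf A)}{\sigma_1(\mathbf A_1)}+1\Big]\sigma_i(\mathbf A).$$
   Context: For a matrix $\mathbf B\in\mathbb C^{p\times q}$ with $p\ge q$, $\sigma_1(\mathbf B)\le\dots\le\sigma_q(\mathbf B)$ denote its singular values in increasing order; thus $\sigma_1(\mathbf A_1)$ is the smallest singular value of $\mathbf A_1$ and $\sigma_n(\mathbf A)$ the largest of $\mathbf A$. *)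

(* Defs.v *)
(* Complex numbers are modelled by an arbitrary
   numClosedFieldType C (e.g. algC); conjugation is Num.conj. *)
From HB Require Import structures.
From mathcomp Require Import all_boot all_order all_algebra.
Set Implicit Arguments. Unset Strict Implicit. Unset Printing Implicit Defensive.
Import Order.TTheory GRing.Theory Num.Theory.
Local Open Scope ring_scope.

Definition ctmx (C : numClosedFieldType) (p q : nat) (A : 'M[C]_(p, q)) : 'M[C]_(q, p) :=
  (map_mx Num.conj A)^T.

Definition unitary_mx (C : numClosedFieldType) (p : nat) (U : 'M[C]_p) : Prop :=
  U *m ctmx U = 1%:M.

Definition upper_trig (C : numClosedFieldType) (p : nat) (R : 'M[C]_p) : Prop :=
  forall i j : 'I_p, (j < i)%N -> R i j = 0.

Definition rdiag_mx (C : numClosedFieldType) (p q : nat) (s : seq C) : 'M[C]_(p, q) :=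
  \matrix_(i < p, j < q) (if (i : nat) == (j : nat) then s`_i else 0).

(* [svals A s] : s = [:: sigma_1; ...; sigma_q] is the list of singular values
   of A (p >= q), in increasing order, i.e. A = U diag(s) V^* is an SVD. *)
Definition svals (C : numClosedFieldType) (p q : nat) (A : 'M[C]_(p, q)) (s : seq C) : Prop :=
  [/\ size s = q, sorted <=%R s, all (fun x => 0 <= x) s &
      exists (U : 'M[C]_p) (V : 'M[C]_q),
        [/\ unitary_mx U, unitary_mx V & A = U *m rdiag_mx p q s *m ctmx V]].

(* Main.v *)
Require Import Defs.
From HB Require Import structures.
From mathcomp Require Import all_boot all_order all_algebra.
From Stdlib Require Import Ring.
Import Order.TTheory GRing.Theory Num.Theory.
Local Open Scope ring_scope.

Section Aux.
Variable C : numClosedFieldType.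
Definition cadd (x y : C) : C := x + y.
Definition cmul (x y : C) : C := x * y.
Definition copp (x : C) : C := - x.
Definition csub (x y : C) : C := x - y.
Definition c0 : C := 0.
Definition c1 : C := 1.
Lemma Cring : @ring_theory C c0 c1 cadd cmul csub copp eq.
Proof.
split; rewrite /cadd /cmul /csub /copp /c0 /c1 => *;
 [exact: add0r|exact: addrC|exact: addrA|exact: mul1r|exact: mulrC
  |exact: mulrA|exact: mulrDl|by []|exact: subrr].
Qed.
Add Ring Cr : Cring.

Lemma id1r (al be u v uc vc : C) : (csub (cadd (cmul (cmul be (cadd al be)) (cmul u uc)) (cmul (cmul al (cadd al be)) (cmul v vc))) (cmul (cmul al be) (cmul (cadd u v) (cadd uc vc)))) = (cmul (csub (cmul be u) (cmul al v)) (csub (cmul be uc) (cmul al vc))).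
Proof. ring. Qed.
Lemma id1 (al be u v uc vc : C) : be * (al + be) * (u * uc) + al * (al + be) * (v * vc) - al * be * ((u + v) * (uc + vc)) = (be * u - al * v) * (be * uc - al * vc).
Proof. exact: (id1r al be u v uc vc). Qed.

Lemma id2r (lam sig s1 Pn rho Y1 W Q1 r2 : C) : (csub (cmul (cmul s1 s1) (csub (cmul (cmul lam W) (cmul (cadd sig s1) (cadd sig s1))) (cmul (cmul s1 s1) rho))) (cadd (cadd (cadd (cadd (cmul (cmul (cmul s1 s1) (csub (cmul s1 s1) lam)) (csub (cmul lam (cadd Y1 W)) (cadd Pn rho))) (cmul (cmul lam (csub (cmul s1 s1) lam)) (csub Q1 (cmul (cmul s1 s1) Y1)))) (csub (cadd (cmul (cmul (csub (cmul s1 s1) lam) (cmul s1 s1)) Pn) (cmul (cmul lam (cmul s1 s1)) r2)) (cmul (cmul lam (csub (cmul s1 s1) lam)) Q1))) (cmul (cmul lam (cmul s1 s1)) (csub (cmul (cmul sig sig) W) (cadd r2 rho)))) (cmul (cmul (cmul (cmul s1 s1) lam) W) (cadd lam (cadd (cmul sig s1) (cmul sig s1)))))) = c0.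
Proof. ring. Qed.
Lemma id2 (lam sig s1 Pn rho Y1 W Q1 r2 : C) : 
  (s1 * s1) * (lam * W * ((sig + s1) * (sig + s1)) - (s1 * s1) * rho) - ((s1 * s1) * ((s1 * s1) - lam) * (lam * (Y1 + W) - (Pn + rho))
  + lam * ((s1 * s1) - lam) * (Q1 - (s1 * s1) * Y1)
  + (((s1 * s1) - lam) * (s1 * s1) * Pn + lam * (s1 * s1) * r2 - lam * ((s1 * s1) - lam) * Q1)
  + lam * (s1 * s1) * ((sig * sig) * W - (r2 + rho))
  + (s1 * s1) * lam * W * (lam + (sig * s1 + sig * s1)))  = 0.
Proof. exact: (id2r lam sig s1 Pn rho Y1 W Q1 r2). Qed.

Definition nrm p (x : 'cV[C]_p) : C := \sum_(i < p) `|x i 0| ^+ 2.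
Arguments nrm {p}.

Lemma nrm_ge0 p (x : 'cV[C]_p) : 0 <= nrm x.
Proof. by apply: sumr_ge0 => i _; rewrite exprn_ge0. Qed.

Lemma nrm_eq0 p (x : 'cV[C]_p) : nrm x = 0 -> x = 0.
Proof.
move=> H; apply/matrixP=> i j; rewrite ord1 mxE.
have Hi : `|x i 0| ^+ 2 = 0.
  by apply: (psumr_eq0P _ H) => // l _; rewrite exprn_ge0.
by move/eqP: Hi; rewrite expf_eq0 /= normr_eq0 => /eqP.
Qed.

Lemma nrm0 p : nrm (0 : 'cV[C]_p) = 0.
Proof. by rewrite /nrm big1 // => i _; rewrite mxE normr0 expr2 mulr0. Qed.

Lemma nrmN p (x : 'cV[C]_p) : nrm (- x) = nrm x.
Proof. by rewrite /nrm; apply: eq_bigr => i _; rewrite mxE normrN. Qed.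

Lemma ctmxE p q (A : 'M[C]_(p,q)) i j : ctmx A i j = (A j i)^*.
Proof. by rewrite /ctmx !mxE. Qed.

Lemma ctmx_mul p q r (A : 'M[C]_(p,q)) (B : 'M_(q,r)) :
  ctmx (A *m B) = ctmx B *m ctmx A.
Proof. by rewrite /ctmx map_mxM trmx_mul. Qed.

Lemma nrmE p (x : 'cV[C]_p) : nrm x = (ctmx x *m x) 0 0.
Proof.
rewrite mxE /nrm; apply: eq_bigr => i _.
by rewrite ctmxE normCK mulrC.
Qed.

Lemma nrm_iso p q (U : 'M[C]_(p,q)) x : ctmx U *m U = 1%:M ->
  nrm (U *m x) = nrm x.
Proof.
move=> H; rewrite !nrmE ctmx_mul mulmxA -(mulmxA _ _ U) H.
by rewrite mulmx1.
Qed.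

Lemma unitaryC p (U : 'M[C]_p) : unitary_mx U -> ctmx U *m U = 1%:M.
Proof. exact: mulmx1C. Qed.

Lemma nrm_col p q (a : 'cV[C]_p) (b : 'cV[C]_q) :
  nrm (col_mx a b) = nrm a + nrm b.
Proof.
rewrite /nrm big_split_ord /=; congr (_ + _); apply: eq_bigr => i _.
  by rewrite col_mxEu.
by rewrite col_mxEd.
Qed.

Lemma sq_ineq (al be u v : C) : 0 <= al -> 0 <= be ->
  al * be * `|u + v| ^+ 2 <= be * (al + be) * `|u| ^+ 2 + al * (al + be) * `|v| ^+ 2.
Proof.
move=> ha hb; rewrite -subr_ge0.
have -> : be * (al + be) * `|u| ^+ 2 + al * (al + be) * `|v| ^+ 2
            - al * be * `|u + v| ^+ 2 = `|be * u - al * v| ^+ 2.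
  rewrite !normCK !rmorphD ?rmorphN !rmorphM /=.
  rewrite (conj_Creal (ger0_real ha)) (conj_Creal (ger0_real hb)).
  exact: id1.
by rewrite exprn_ge0.
Qed.

Lemma nrm_ineq p (al be : C) (a b : 'cV[C]_p) : 0 <= al -> 0 <= be ->
  al * be * nrm (a + b) <= be * (al + be) * nrm a + al * (al + be) * nrm b.
Proof.
move=> ha hb; rewrite /nrm !mulr_sumr -big_split /=.
by apply: ler_sum => i _; rewrite mxE; apply: sq_ineq.
Qed.

Lemma rdiag_nrm p q (s : seq C) (e : 'cV[C]_q) : (q <= p)%N ->
  nrm (rdiag_mx p q s *m e) = \sum_(j < q) `|s`_j| ^+ 2 * `|e j 0| ^+ 2.
Proof.
move=> Hqp; rewrite /nrm.
transitivity (\sum_(r < p) \sum_(j < q)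
   (((r : nat) == j) %:R * (`|s`_j| ^+ 2 * `|e j 0| ^+ 2))).
  apply: eq_bigr => r _; rewrite mxE.
  case: (ltnP r q) => Hr.
    have Hne : forall j : 'I_q, j != Ordinal Hr -> ((r : nat) == j) = false.
      move=> j Hj; apply/negbTE; apply: contra Hj => /eqP E.
      by apply/eqP; apply: val_inj; rewrite /= E.
    rewrite (bigD1 (Ordinal Hr)) //= big1 ?addr0; last first.
      by move=> j Hj; rewrite mxE Hne // mul0r.
    rewrite (bigD1 (Ordinal Hr)) //= big1 ?addr0; last first.
      by move=> j Hj; rewrite Hne // mul0r.
    by rewrite mxE /= eqxx mul1r normrM exprMn.
  rewrite !big1 ?normr0 ?expr2 ?mulr0 // => j _.
    have -> : ((r : nat) == j) = false.
      by apply/negbTE; rewrite neq_ltn (leq_trans (ltn_ord j) Hr) orbT.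
    by rewrite mul0r.
  rewrite mxE; have -> : ((r : nat) == j) = false.
    by apply/negbTE; rewrite neq_ltn (leq_trans (ltn_ord j) Hr) orbT.
  by rewrite mul0r.
rewrite exchange_big; apply: eq_bigr => j _.
rewrite (bigD1 (widen_ord Hqp j)) //= eqxx mul1r big1 ?addr0 // => r Hr.
have -> : ((r : nat) == j) = false.
  apply/negbTE; apply: contra Hr => /eqP E; apply/eqP; apply: val_inj.
  by rewrite /= E.
by rewrite mul0r.
Qed.

Lemma svd_nrm p q (M : 'M[C]_(p,q)) s U V : (q <= p)%N -> unitary_mx U ->
  unitary_mx V -> M = U *m rdiag_mx p q s *m ctmx V -> forall e,
  nrm (M *m (V *m e)) = \sum_(j < q) `|s`_j| ^+ 2 * `|e j 0| ^+ 2.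
Proof.
move=> Hqp HU HV -> e.
rewrite -!mulmxA (mulmxA (ctmx V)) (@unitaryC _ V HV) mul1mx nrm_iso ?unitaryC //.
exact: rdiag_nrm.
Qed.

Lemma nth_ge0 (s : seq C) j : all (fun x => 0 <= x) s -> 0 <= s`_j.
Proof.
move=> Hall; case: (ltnP j (size s)) => H.
  exact: (all_nthP 0 Hall j H).
by rewrite nth_default.
Qed.

Lemma nth_mono (s : seq C) i j : sorted <=%R s -> (i <= j)%N ->
  (j < size s)%N -> s`_i <= s`_j.
Proof.
move=> Hs Hij Hj; apply: (le_sorted_leq_nth 0 Hs) => //.
by rewrite inE (leq_ltn_trans Hij Hj).
Qed.

Lemma sq_le (a b : C) : 0 <= a -> a <= b -> a ^+ 2 <= b ^+ 2.
Proof. by move=> ha hab; rewrite !expr2 ler_pM // (le_trans ha hab). Qed.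

Lemma svd_supp_upper p q (M : 'M[C]_(p,q)) s U V i : (q <= p)%N ->
  size s = q -> sorted <=%R s -> all (fun x => 0 <= x) s ->
  unitary_mx U -> unitary_mx V -> M = U *m rdiag_mx p q s *m ctmx V ->
  (i < q)%N -> forall e : 'cV_q, (forall j : 'I_q, (i < j)%N -> e j 0 = 0) ->
  nrm (M *m (V *m e)) <= s`_i ^+ 2 * nrm (V *m e).
Proof.
move=> Hqp Hsz Hsrt Hpos HU HV EM Hi e He.
rewrite (@svd_nrm _ _ M s U V Hqp HU HV EM) (@nrm_iso _ _ V e (@unitaryC _ V HV)) /nrm mulr_sumr.
apply: ler_sum => j _.
case: (ltnP i j) => Hij.
  by rewrite He // normr0 !expr2 !mulr0.
rewrite (ger0_norm (@nth_ge0 s j Hpos)); apply: ler_wpM2r; first by rewrite exprn_ge0.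
by apply: sq_le; [exact: nth_ge0 | apply: nth_mono => //; rewrite Hsz].
Qed.

Lemma svd_supp_lower p q (M : 'M[C]_(p,q)) s U V i : (q <= p)%N ->
  size s = q -> sorted <=%R s -> all (fun x => 0 <= x) s ->
  unitary_mx U -> unitary_mx V -> M = U *m rdiag_mx p q s *m ctmx V ->
  forall e : 'cV_q, (forall j : 'I_q, (j < i)%N -> e j 0 = 0) ->
  s`_i ^+ 2 * nrm (V *m e) <= nrm (M *m (V *m e)).
Proof.
move=> Hqp Hsz Hsrt Hpos HU HV EM e He.
rewrite (@svd_nrm _ _ M s U V Hqp HU HV EM) (@nrm_iso _ _ V e (@unitaryC _ V HV)) /nrm mulr_sumr.
apply: ler_sum => j _.
case: (ltnP j i) => Hij.
  by rewrite He // normr0 !expr2 !mulr0.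
rewrite (ger0_norm (@nth_ge0 s j Hpos)); apply: ler_wpM2r; first by rewrite exprn_ge0.
by apply: sq_le; [exact: nth_ge0 | apply: nth_mono => //; rewrite Hsz].
Qed.

Lemma ker_exists a b k (G1 : 'M[C]_(a,k)) (G2 : 'M[C]_(b,k)) : (k < a + b)%N ->
  exists (c : 'rV[C]_a) (d : 'rV[C]_b), ((c != 0) || (d != 0)) /\ c *m G1 = d *m G2.
Proof.
move=> Hk; set N := col_mx G1 (- G2).
have Hr : (0 < \rank (kermx N))%N.
  by rewrite mxrank_ker subn_gt0 (leq_ltn_trans (rank_leq_col N)).
have HK : kermx N != 0 by rewrite -mxrank_eq0 -lt0n.
have [i0 Hi0] : exists i0, row i0 (kermx N) != 0.
  case: (pickP (fun i => row i (kermx N) != 0)) => [i0 Hi0|H0]; first by exists i0.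
  move: HK; suff -> : kermx N = 0 by rewrite eqxx.
  apply/row_matrixP => i; rewrite row0; move: (H0 i) => /negbFE/eqP //.
set u := row i0 (kermx N).
have Hu : u *m N = 0 by apply/sub_kermxP; exact: row_sub.
exists (lsubmx u), (rsubmx u); split.
  case: (boolP (lsubmx u == 0)) => [/eqP H1|H1]; last by apply/orP; left.
  case: (boolP (rsubmx u == 0)) => [/eqP H2|H2]; last by apply/orP; right.
  have u0 : u = 0 by rewrite -(hsubmxK u) H1 H2 row_mx0.
  by move: Hi0; rewrite -/u u0 eqxx.
move: Hu; rewrite -{1}(hsubmxK u) mul_row_col mulmxN => /eqP.
by rewrite subr_eq0 => /eqP.
Qed.

Lemma scal (lam mu sig s1 Pn rho Y1 W Q1 r2 : C) :
  0 <= lam -> lam < mu -> mu = s1 ^+ 2 -> 0 <= s1 -> 0 <= sig ->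
  0 <= W ->
  Pn + rho <= lam * (Y1 + W) -> mu * Y1 <= Q1 ->
  lam * (mu - lam) * Q1 <= (mu - lam) * mu * Pn + lam * mu * r2 ->
  r2 + rho <= sig ^+ 2 * W ->
  mu * rho <= lam * W * (sig + s1) ^+ 2.
Proof.
move=> hl hlm hmu hs1 hsig hW h1 h2 h3 h4.
have hm : 0 < mu by apply: le_lt_trans hlm.
have hml : 0 <= mu - lam by rewrite subr_ge0 ltW.
rewrite -subr_ge0 -(pmulr_rge0 _ hm).
have -> : mu * (lam * W * (sig + s1) ^+ 2 - mu * rho) =
  mu * (mu - lam) * (lam * (Y1 + W) - (Pn + rho))
  + lam * (mu - lam) * (Q1 - mu * Y1)
  + ((mu - lam) * mu * Pn + lam * mu * r2 - lam * (mu - lam) * Q1)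
  + lam * mu * (sig ^+ 2 * W - (r2 + rho))
  + mu * lam * W * (lam + (sig * s1 + sig * s1)).
  apply/eqP; rewrite -subr_eq0; apply/eqP; rewrite hmu !expr2; exact: id2.
have hm0 := ltW hm.
apply: addr_ge0.
  apply: addr_ge0; last by apply: mulr_ge0; [apply: mulr_ge0 | rewrite subr_ge0].
  apply: addr_ge0; last by rewrite subr_ge0.
  apply: addr_ge0; apply: mulr_ge0; try (by rewrite subr_ge0); by apply: mulr_ge0.
apply: mulr_ge0; first by apply: mulr_ge0 => //; apply: mulr_ge0.
by apply: addr_ge0 => //; apply: addr_ge0; apply: mulr_ge0.
Qed.

End Aux.
Arguments nrm {C p}.

Theorem lemma3 (C : numClosedFieldType) (m n1 k : nat)
    (A Q : 'M[C]_(m, n1 + k)) (R : 'M[C]_(n1 + k))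
    (sA sA1 sR22 : seq C) :
  (0 < n1)%N -> (n1 + k <= m)%N ->
  ctmx Q *m Q = 1%:M -> upper_trig R -> A = Q *m R ->
  svals A sA -> svals (lsubmx A) sA1 -> svals (drsubmx R) sR22 ->
  (forall i, (i < k)%N -> sA`_i < sA1`_0) ->
  forall i, (i < k)%N ->
    sR22`_i <= (sA`_(n1 + k).-1 / sA1`_0 + 1) * sA`_i.
Proof.
move=> Hn1 Hm HQ HR HA [szA srtA posA [UA [VA [HUA HVA EA]]]]
  [szA1 srtA1 posA1 [U1 [V1 [HU1 HV1 EA1]]]]
  [szR srtR posR [U2 [V2 [HU2 HV2 ER]]]] Hlt i Hik.
set lam := sA`_i ^+ 2.
set s1 := sA1`_0.
set mu := s1 ^+ 2.
set sig := sA`_(n1 + k).-1.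
have Hi0 : 0 <= sA`_i by apply: nth_ge0.
have Hs1 : sA`_i < s1 by apply: Hlt.
have Hs10 : 0 < s1 by apply: le_lt_trans Hs1.
have Hsig : 0 <= sig by apply: nth_ge0.
have Hlm : lam < mu by rewrite /lam /mu !expr2 ltr_pM.
have Hl0 : 0 <= lam by rewrite exprn_ge0.
have hm : 0 < mu by apply: le_lt_trans Hlm.
have hml : 0 <= mu - lam by rewrite subr_ge0 ltW.
have Hn1m : (n1 <= m)%N by rewrite (leq_trans (leq_addr k n1)).
have Hnn : (0 < n1 + k)%N by rewrite (leq_trans Hn1) ?leq_addr.
have Hik' : (i < n1 + k)%N by exact: (leq_trans Hik (leq_addl n1 k)).
have QR : forall z, nrm (A *m z) = nrm (R *m z).
  by move=> z; rewrite HA -mulmxA (@nrm_iso C _ _ Q (R *m z) HQ).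
have A1low : forall z : 'cV_n1, mu * nrm z <= nrm (lsubmx A *m z).
  move=> z; have Ez : z = V1 *m (ctmx V1 *m z) by rewrite mulmxA HV1 mul1mx.
  rewrite Ez; apply: (@svd_supp_lower C m n1 (lsubmx A) sA1 U1 V1 0) => //.
have Aup : forall z, nrm (A *m z) <= sig ^+ 2 * nrm z.
  move=> z; have Ez : z = VA *m (ctmx VA *m z) by rewrite mulmxA HVA mul1mx.
  rewrite Ez; apply: (@svd_supp_upper C m (n1 + k) A sA UA VA (n1 + k).-1) => //.
    by rewrite prednK.
  move=> j Hj; have H1 : (j <= (n1 + k).-1)%N by rewrite -ltnS prednK // ltn_ord.
  by rewrite leqNgt Hj in H1.
have Hin : (i.+1 <= n1 + k)%N by exact: Hik'.
have Hg : forall l : 'I_(k - i), (i + l < k)%N.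
  by move=> l; rewrite -ltn_subRL ltn_ord.
pose f := fun l : 'I_i.+1 => widen_ord Hin l.
pose g := fun l : 'I_(k - i) => Ordinal (Hg l).
have Hk : (k < i.+1 + (k - i))%N by rewrite addSn subnKC // ltnW.
have [c [d [Hcd Ecd]]] :=
  @ker_exists C _ _ _ (rowsub f (dsubmx VA)^T) (rowsub g V2^T) Hk.
pose e := (c *m rowsub f 1%:M)^T.
pose e2 := (d *m rowsub g 1%:M)^T.
have e_supp : forall j : 'I_(n1 + k), (i < j)%N -> e j 0 = 0.
  move=> j Hj; rewrite !mxE big1 // => l _; rewrite !mxE.
  have -> : (f l == j) = false.
    apply/negbTE/eqP => E; move: Hj; rewrite -E /= ltnNge -ltnS ltn_ord.
    by [].
  by rewrite mulr0n mulr0.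
have e_val : forall l, e (f l) 0 = c 0 l.
  move=> l; rewrite !mxE (bigD1 l) //= big1 ?addr0.
    by rewrite !mxE eqxx mulr1n mulr1.
  move=> l' Hl'; rewrite !mxE.
  have -> : (f l' == f l) = false.
    apply/negbTE; apply: contra Hl' => /eqP E; apply/eqP; apply: val_inj.
    exact: (congr1 val E).
  by rewrite mulr0n mulr0.
have e2_supp : forall j : 'I_k, (j < i)%N -> e2 j 0 = 0.
  move=> j Hj; rewrite !mxE big1 // => l _; rewrite !mxE.
  have -> : (g l == j) = false.
    apply/negbTE/eqP => E; move: Hj; rewrite -E /= ltnNge leq_addr.
    by [].
  by rewrite mulr0n mulr0.
have e2_val : forall l, e2 (g l) 0 = d 0 l.
  move=> l; rewrite !mxE (bigD1 l) //= big1 ?addr0.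
    by rewrite !mxE eqxx mulr1n mulr1.
  move=> l' Hl'; rewrite !mxE.
  have -> : (g l' == g l) = false.
    apply/negbTE; apply: contra Hl' => /eqP E; apply/eqP; apply: val_inj.
    by apply/eqP; rewrite -(eqn_add2l i); apply/eqP; exact: (congr1 val E).
  by rewrite mulr0n mulr0.
have Ew : dsubmx VA *m e = V2 *m e2.
  have H := congr1 trmx Ecd.
  rewrite [rowsub f (dsubmx VA)^T]rowsubE [rowsub g V2^T]rowsubE !mulmxA !trmx_mul !trmxK in H.
  by rewrite /e /e2 !trmx_mul H.
set y := VA *m e.
set w := V2 *m e2.
have wE : dsubmx y = w by rewrite /y -mul_dsub_mx Ew.
set y1 := usubmx y.
have yE : y = col_mx y1 w by rewrite /y1 -wE vsubmxK.
have Tb : nrm (A *m y) <= lam * nrm y.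
  exact: (@svd_supp_upper C m (n1 + k) A sA UA VA i (Hm) szA srtA posA HUA HVA EA
     Hik' e e_supp).
have R4 : sR22`_i ^+ 2 * nrm w <= nrm (drsubmx R *m w).
  exact: (@svd_supp_lower C k k (drsubmx R) sR22 U2 V2 i (leqnn k) szR srtR posR
     HU2 HV2 ER e2 e2_supp).
have HRb : dlsubmx R = 0.
  apply/matrixP => a b; rewrite !mxE; apply: HR => /=.
  exact: (leq_trans (ltn_ord b) (leq_addr a n1)).
have RE : R = block_mx (ulsubmx R) (ursubmx R) 0 (drsubmx R) by rewrite -HRb submxK.
have Rmul : forall (a : 'cV_n1) (b : 'cV_k), R *m col_mx a b =
    col_mx (ulsubmx R *m a + ursubmx R *m b) (drsubmx R *m b).
  by move=> a b; rewrite {1}RE mul_block_col mul0mx add0r.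
have Acol : forall z : 'cV_n1, A *m col_mx z 0 = lsubmx A *m z.
  by move=> z; rewrite -{1}(hsubmxK A) mul_row_col mulmx0 addr0.
set P := ulsubmx R *m y1 + ursubmx R *m w.
have F1 : nrm P + nrm (drsubmx R *m w) <= lam * (nrm y1 + nrm w).
  by move: Tb; rewrite QR yE Rmul !nrm_col.
have F2 : mu * nrm y1 <= nrm (ulsubmx R *m y1).
  by move: (A1low y1); rewrite -Acol QR Rmul !mulmx0 addr0 nrm_col nrm0 addr0.
have F3 : lam * (mu - lam) * nrm (ulsubmx R *m y1) <=
    (mu - lam) * mu * nrm P + lam * mu * nrm (ursubmx R *m w).
  have := @nrm_ineq C _ lam (mu - lam) P (- (ursubmx R *m w)) Hl0 hml.
  have -> : lam + (mu - lam) = mu by rewrite addrC subrK.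
  by rewrite /P addrK nrmN.
have F4 : nrm (ursubmx R *m w) + nrm (drsubmx R *m w) <= sig ^+ 2 * nrm w.
  by move: (Aup (col_mx 0 w)); rewrite QR Rmul !mulmx0 !nrm_col nrm0 !add0r.
have Hmain : mu * nrm (drsubmx R *m w) <= lam * nrm w * (sig + s1) ^+ 2.
  exact: (@scal C _ _ _ _ _ _ _ _ _ _ Hl0 Hlm erefl (ltW Hs10) Hsig (@nrm_ge0 C _ w)
            F1 F2 F3 F4).
have Wpos : 0 < nrm w.
  rewrite lt_def nrm_ge0 andbT; apply/negP => /eqP W0.
  have w0 : w = 0 by apply: nrm_eq0.
  have e20 : e2 = 0.
    by apply: nrm_eq0; rewrite -(@nrm_iso C _ _ V2 e2 (@unitaryC C _ V2 HV2)).
  have d0 : d = 0 by apply/rowP => l; rewrite -e2_val e20 !mxE.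
  have Hy : mu * nrm y1 <= lam * nrm y1.
    apply: (le_trans F2).
    have -> : ulsubmx R *m y1 = P by rewrite /P w0 mulmx0 addr0.
    apply: (@le_trans _ _ (nrm P + nrm (drsubmx R *m w))).
      by rewrite lerDl nrm_ge0.
    by move: F1; rewrite W0 addr0.
  rewrite -subr_ge0 -mulrBl nmulr_rge0 ?subr_lt0 // in Hy.
  have Y0 : nrm y1 = 0 by apply/eqP; rewrite eq_le Hy nrm_ge0.
  have e0 : e = 0.
    apply: nrm_eq0; rewrite -(@nrm_iso C _ _ VA e (@unitaryC C _ VA HVA)).
    by rewrite -/y yE nrm_col Y0 W0 addr0.
  have c0 : c = 0 by apply/rowP => l; rewrite -e_val e0 !mxE.
  by move: Hcd; rewrite c0 d0 !eqxx.
have Hfin : mu * (sR22`_i ^+ 2 * nrm w) <= lam * nrm w * (sig + s1) ^+ 2.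
  by apply: le_trans Hmain; rewrite ler_pM2l.
have Hsq : (s1 * sR22`_i) ^+ 2 <= (sA`_i * (sig + s1)) ^+ 2.
  rewrite !exprMn -(ler_pM2r Wpos) -mulrA [X in _ <= X]mulrAC.
  exact: Hfin.
have HsR : 0 <= sR22`_i by apply: nth_ge0.
have Hsq' : s1 * sR22`_i <= sA`_i * (sig + s1).
  by rewrite -ler_sqr ?nnegrE ?mulr_ge0 ?addr_ge0 // ltW.
have s1n0 : s1 != 0 by rewrite gt_eqF.
rewrite -(ler_pM2l Hs10).
have -> : s1 * ((sig / s1 + 1) * sA`_i) = sA`_i * (sig + s1).
  by rewrite mulrA mulrDr mulr1 [s1 * _]mulrC divfK // mulrC.
exact: Hsq'.
Qed.
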